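(* There exist two disjoint thin sets $T_0,T_1\subseteq\mathbb{Z}_2^\omega$, neither of which is Borel, such that $T_0\cup T_1=\mathbb{Z}_2^\omega$.
   Context: $\mathbb{Z}_2^\omega$ is the Cantor cube of infinite binary sequences indexed by $\omega=\{0,1,2,\dots\}$, with the product topology. A set $T\subseteq\mathbb{Z}_2^\omega$ is thin if for every $n\in\omega$ the map $x\mapsto x|_{\omega\setminus\{n\}}$ is injective on $T$ (equivalently, no two distinct elements of $T$ differ in exactly one coordinate). *)

(* Defs.v *)
From HB Require Import structures.
From mathcomp Require Import all_boot all_order all_algebra.
From mathcomp Require Import all_classical all_reals all_analysis.
Set Implicit Arguments. Unset Strict Implicit. Unset Printing Implicit Defensive.
Local Open Scope classical_set_scope.

(* Z_2^omega = cantor_space = bool^nat with the product topology. *)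

Definition borel_set (A : set cantor_space) : Prop :=
  <<s [set U : set cantor_space | open U] >> A.

Definition restr_away (n : nat) (x : cantor_space) : {k : nat | k <> n} -> bool :=
  fun k => x (proj1_sig k).

Arguments restr_away : clear implicits.

Definition thin (T : set cantor_space) : Prop :=
  forall (n : nat) (x y : cantor_space),
    T x -> T y -> restr_away n x = restr_away n y -> x = y.

(* Main.v *)
Require Import Defs.
From mathcomp Require Import all_boot all_classical all_analysis.
Import numFieldTopology.Exports.
Local Open Scope classical_set_scope.

Definition agree (x y : cantor_space) n := forall i, (i < n)%N -> x i = y i.
Definition cyl (y : cantor_space) m : set cantor_space := fun z => agree z y m.
Lemma cyl_open y m : open (cyl y m).
Proof.
elim: m => [|m IH].
  rewrite (_ : cyl y 0 = setT); first exact: openT.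
  by rewrite funeqE => z; rewrite propeqE; split => // _ i.
rewrite (_ : cyl y m.+1 = cyl y m `&` (proj m @^-1` [set y m])).
  apply: openI => //; apply: open_comp; last exact: discrete_open.
  by move=> z _; exact: proj_continuous.
rewrite funeqE => z; rewrite propeqE; split.
  by move=> h; split; [move=> i im; apply: h; exact: ltnW|apply: h].
move=> [h1 h2] i; rewrite ltnS leq_eqVlt => /orP[/eqP->|]; [exact: h2|exact: h1].
Qed.
Lemma open_cyl (U : set cantor_space) x : open U -> U x -> exists n, cyl x n `<=` U.
Proof.
move=> oU Ux; apply: contrapT => hn.
have h n : exists y, cyl x n y /\ ~ U y.
  apply: contrapT => h; apply: hn; exists n => y cy; apply: contrapT => nU.
  by apply: h; exists y.
pose y n := get (fun y => cyl x n y /\ ~ U y).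
have yP n : cyl x n (y n) /\ ~ U (y n) by exact: (getPex (h n)).
have cv : y @ \oo --> (x : cantor_space).
  apply/(pointwise_cvgP (U:=nat) (V:=bool)) => t.
  move=> A /= /nbhs_singleton At.
  exists t.+1 => // k /= tk; rewrite /= (proj1 (yP k) t) //.
have : \forall n \near \oo, U (y n).
  apply: cv; exact: open_nbhs_nbhs.
by move=> [N _ HN]; apply: (proj2 (yP N)); apply: HN => /=.
Qed.
Definition ND (F : set cantor_space) := forall x n, exists y m,
  (n <= m)%N /\ agree y x n /\ (forall z, cyl y m z -> ~ F z).
Definition meager (M : set cantor_space) := exists F : nat -> set cantor_space,
  (forall k, ND (F k)) /\ (forall x, M x -> exists k, F k x).

Lemma baire x n : ~ meager (cyl x n).
Proof.
move=> [F [NDF cover]].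
have G k (p : cantor_space * nat) : exists q : cantor_space * nat,
    (p.2 < q.2)%N /\ agree q.1 p.1 p.2 /\ (forall z, cyl q.1 q.2 z -> ~ F k z).
  have [y [m [nm [ag dis]]]] := NDF k p.1 p.2.
  exists (y, m.+1) => /=; split; first by rewrite ltnS.
  split => // z cz; apply: dis => i im; apply: cz; exact: ltnW.
pose g k p := get (fun q : cantor_space * nat => (p.2 < q.2)%N /\ agree q.1 p.1 p.2 /\
   (forall z, cyl q.1 q.2 z -> ~ F k z)).
have gP k p := getPex (G k p).
pose s := fix s k := if k is k'.+1 then g k' (s k') else (x, n).
have sS k : s k.+1 = g k (s k) by [].
have mono j k : (j <= k)%N -> ((s j).2 <= (s k).2)%N /\ agree (s k).1 (s j).1 (s j).2.
  elim: k => [|k IH]; first by rewrite leqn0 => /eqP ->; split => //.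
  rewrite leq_eqVlt => /orP[/eqP ->|]; first by split.
  rewrite ltnS => /IH [le ag]; rewrite sS; have [a [b _]] := gP k (s k).
  split; first by apply: (leq_trans le); exact: ltnW.
  move=> i ij; rewrite b; [exact: ag|exact: leq_trans ij le].
have big k : (k <= (s k).2)%N.
  elim: k => [|k IH] //; rewrite sS; have [a _] := gP k (s k).
  exact: leq_ltn_trans IH a.
pose z : cantor_space := fun i => (s i.+1).1 i.
have zin k : cyl (s k).1 (s k).2 z.
  move=> i ik; rewrite /z; case: (leqP k i.+1) => h.
    by have [_ ag] := mono _ _ h; apply: ag.
  have [_ ag] := mono _ _ (ltnW h); apply/esym/ag.
  exact: leq_trans (ltnSn i) (big _).
have [k Fk] := cover z (zin 0).
have := zin k.+1; rewrite sS; have [_ [_ c]] := gP k (s k).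
by move/c.
Qed.

Lemma meager_sub A B : A `<=` B -> meager B -> meager A.
Proof. by move=> AB [F [h c]]; exists F; split => // x /AB /c. Qed.

Lemma ND0 : ND set0.
Proof. by move=> x n; exists x, n; split=> //; split=> // z _ []. Qed.

Lemma meager_bigcup (A : nat -> set cantor_space) :
  (forall k, meager (A k)) -> meager (fun x => exists k, A k x).
Proof.
move=> mA.
have mA' k : {F : nat -> set cantor_space | (forall j, ND (F j)) /\ (forall x, A k x -> exists j, F j x)}.
  by apply: cid; exact: mA.
pose F n := match (unpickle n : option (nat * nat)) with
  | Some p => proj1_sig (mA' p.1) p.2 | None => set0 end.
exists F; split.
  move=> n; rewrite /F; case: (unpickle n) => [[a b]|]; last exact: ND0.
  exact: (proj1 (proj2_sig (mA' a))).
move=> x [k Akx]; have [j Fj] := proj2 (proj2_sig (mA' k)) x Akx.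
by exists (pickle (k, j)); rewrite /F pickleK.
Qed.

Lemma meagerU A B : meager A -> meager B -> meager (A `|` B).
Proof.
move=> mA mB; pose C k := if k is 0 then A else B.
apply: (@meager_sub _ (fun x => exists k, C k x)); last first.
  by apply: meager_bigcup => -[|k].
by move=> x [Ax|Bx]; [exists 0|exists 1].
Qed.

Definition flip (i : nat) (x : cantor_space) : cantor_space :=
  fun j => if j == i then ~~ x j else x j.

Lemma flipK i x : flip i (flip i x) = x.
Proof.
apply: functional_extensionality_dep => j; rewrite /flip.
by case: (j == i) => //; rewrite negbK.
Qed.

Lemma agree_flip i x y n : agree x y n -> agree (flip i x) (flip i y) n.
Proof. by move=> h j jn; rewrite /flip h. Qed.

Lemma meager_flip i M : meager M -> meager (flip i @^-1` M).
Proof.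
move=> [F [NDF c]]; exists (fun k => flip i @^-1` F k); split; last first.
  by move=> x /c.
move=> k x n; have [y [m [nm [ag dis]]]] := NDF k (flip i x) n.
exists (flip i y), m; split => //; split.
  by rewrite -(flipK i x); apply: agree_flip.
move=> z cz; apply: dis; rewrite -(flipK i y); exact: agree_flip.
Qed.

Definition BP (A : set cantor_space) := exists U M, open U /\ meager M /\
  forall x, ~ M x -> (A x <-> U x).

Lemma agree_trans x y z n : agree x y n -> agree y z n -> agree x z n.
Proof. by move=> h1 h2 i hi; rewrite h1 // h2. Qed.

Lemma BPC A : BP A -> BP (~` A).
Proof.
move=> [U [M [oU [mM hA]]]].
pose V : set cantor_space := fun x => exists n, forall y, cyl x n y -> ~ U y.
pose N : set cantor_space := fun x => ~ U x /\ ~ V x.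
exists V, (M `|` N); split.
  rewrite openE => x [n hn]; apply: (@filterS _ _ _ (cyl x n)).
    move=> z cz; exists n => y cy; apply: hn => i im.
    by rewrite cy // cz.
  by apply: open_nbhs_nbhs; split; [exact: cyl_open|].
split.
  apply: meagerU => //; exists (fun _ => N); split; last by move=> x Nx; exists 0.
  move=> _ x n.
  case: (pselect (exists y, cyl x n y /\ U y)) => [[y [cy Uy]]|].
    have [m hm] := open_cyl _ _ oU Uy.
    exists y, (maxn n m); split; first exact: leq_maxl.
    split; first by move=> i h; rewrite cy.
    move=> z cz [nU _]; apply: nU; apply: hm => i im; apply: cz.
    exact: leq_trans im (leq_maxr _ _).
  move=> hn; exists x, n; split => //; split => // z cz [_ nV]; apply: nV.
  exists n => y cy Uy; apply: hn; exists y; split => //.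
  exact: agree_trans cy cz.
move=> x nMN; have nM : ~ M x by move=> h; apply: nMN; left.
split.
  move=> nA; apply: contrapT => nV; apply: nMN; right; split => //.
  by move=> /(hA x nM).
by move=> [n hn] /(hA x nM); apply: hn.
Qed.

Lemma meager0 : meager set0.
Proof. by exists (fun _ => set0); split => //; exact: (fun _ => ND0). Qed.

Lemma BP_open U : open U -> BP U.
Proof. by move=> oU; exists U, set0; split => //; split => //; exact: meager0. Qed.

Lemma BP_bigcup (A : nat -> set cantor_space) : (forall k, BP (A k)) -> BP (\bigcup_k A k).
Proof.
move=> h.
have h' k : {p : set cantor_space * set cantor_space | open p.1 /\ meager p.2 /\
   forall x, ~ p.2 x -> (A k x <-> p.1 x)}.
  apply: cid; have [U [M H]] := h k; by exists (U, M).
exists (\bigcup_k (proj1_sig (h' k)).1), (fun x => exists k, (proj1_sig (h' k)).2 x).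
split; first by apply: bigcup_open => k _; exact: (proj1 (proj2_sig (h' k))).
split; first by apply: meager_bigcup => k; exact: (proj1 (proj2 (proj2_sig (h' k)))).
move=> x nM; split.
  move=> [k _ Ak]; exists k => //; apply/(proj2 (proj2 (proj2_sig (h' k))) x) => //.
  by move=> hk; apply: nM; exists k.
move=> [k _ Uk]; exists k => //; apply/(proj2 (proj2 (proj2_sig (h' k))) x) => //.
by move=> hk; apply: nM; exists k.
Qed.

Lemma borel_BP A : borel_set A -> BP A.
Proof.
move=> hA; apply: (smallest_sub (C := sigma_algebra setT)) hA.
  split.
  - by apply: BP_open; exact: open0.
  - by move=> B hB; rewrite setTD; exact: BPC.
  - exact: BP_bigcup.
by move=> U oU; exact: BP_open.
Qed.

Definition E0 (x : cantor_space) : set cantor_space :=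
  fun y => exists N, forall i, (N <= i)%N -> x i = y i.
Definition rep x := get (E0 x).

Lemma repP x : E0 x (rep x).
Proof. by apply: getPex; exists x, 0. Qed.

Lemma rep_eq x y : E0 x y -> rep x = rep y.
Proof.
move=> [N hN]; rewrite /rep; congr get; rewrite funeqE => z; rewrite propeqE.
split => -[M hM]; exists (maxn N M) => i hi.
  by rewrite -hN ?hM // (leq_trans _ hi) // ?leq_maxl ?leq_maxr.
by rewrite hN ?hM // (leq_trans _ hi) // ?leq_maxl ?leq_maxr.
Qed.

Fixpoint cnt (f : nat -> bool) N : nat := if N is k.+1 then (cnt f k + f k)%N else 0.

Lemma cnt_stable f N M : (N <= M)%N -> (forall i, (N <= i)%N -> f i = false) ->
  cnt f M = cnt f N.
Proof.
move=> NM h; elim: M NM => [|M IH]; first by rewrite leqn0 => /eqP ->.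
rewrite leq_eqVlt => /orP[/eqP ->|] //; rewrite ltnS => NM /=.
by rewrite IH // h // addn0.
Qed.

Lemma cnt_flip f g i N : (forall j, j != i -> g j = f j) -> g i = ~~ f i ->
  odd (cnt g N) = odd (cnt f N) (+) (i < N)%N.
Proof.
move=> h1 h2; elim: N => [|N IH] //=; rewrite !oddD IH ltnS.
case: (eqVneq i N) => [<-|ne].
  by rewrite ltnn leqnn h2; case: (f i); case: (odd (cnt f i)).
rewrite h1 1?eq_sym // ltn_neqAle ne /=.
by case: (f N); case: (odd (cnt f N)); case: (i <= N)%N.
Qed.

Definition dif x := fun i => x i != rep x i.
Definition T0 : set cantor_space := fun x =>
  exists N, (forall i, (N <= i)%N -> x i = rep x i) /\ ~~ odd (cnt (dif x) N).

Lemma T0_iff x N : (forall i, (N <= i)%N -> x i = rep x i) ->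
  (T0 x <-> ~~ odd (cnt (dif x) N)).
Proof.
move=> hN; split; last by move=> h; exists N.
move=> [M [hM hp]].
have e1 : cnt (dif x) (maxn N M) = cnt (dif x) N.
  by apply: cnt_stable; [exact: leq_maxl|move=> i hi; rewrite /dif hN // eqxx].
have e2 : cnt (dif x) (maxn N M) = cnt (dif x) M.
  by apply: cnt_stable; [exact: leq_maxr|move=> i hi; rewrite /dif hM // eqxx].
by rewrite -e1 e2.
Qed.

Lemma T0_flip i x : T0 (flip i x) <-> ~ T0 x.
Proof.
have rf : rep (flip i x) = rep x.
  apply: rep_eq; exists i.+1 => j hj; rewrite /flip.
  by case: eqP => // ji; move: hj; rewrite ji ltnn.
have [N hN] := repP x.
pose N' := maxn N i.+1.
have Hx j : (N' <= j)%N -> x j = rep x j.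
  by move=> hj; apply: hN; exact: leq_trans (leq_maxl _ _) hj.
have Hf j : (N' <= j)%N -> flip i x j = rep (flip i x) j.
  move=> hj; rewrite rf -Hx // /flip.
  case: eqP => // ji; have := leq_trans (leq_maxr N i.+1) hj.
  by rewrite ji ltnn.
rewrite (T0_iff _ _ Hf) (T0_iff _ _ Hx).
rewrite (@cnt_flip (dif x) (dif (flip i x)) i N').
- rewrite (leq_trans _ (leq_maxr N i.+1)) //.
  by case: (odd _); split.
- by move=> j ji; rewrite /dif rf /flip (negbTE ji).
- by rewrite /dif rf /flip eqxx; case: (x i); case: (rep x i).
Qed.

Lemma agree_flip_out i z n : (n <= i)%N -> agree (flip i z) z n.
Proof.
move=> ni j jn; rewrite /flip; case: eqP => // ji.
by move: (leq_trans jn ni); rewrite ji ltnn.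
Qed.

Lemma notBP : ~ BP T0.
Proof.
move=> [U [M [oU [mM h]]]].
case: (pselect (exists x, U x)) => [[x Ux]|noU].
  have [n hn] := open_cyl _ _ oU Ux.
  pose m := n.+1; pose t := flip n x.
  have cU : cyl x m `<=` U.
    by move=> z cz; apply: hn => i im; apply: cz; exact: ltnW.
  apply: (baire t m).
  apply: (@meager_sub _ ((flip n @^-1` M) `|` (flip m @^-1` (flip n @^-1` M)))).
    move=> z cz; case: (pselect (T0 z)) => Tz.
      left; apply: contrapT => nM; rewrite /preimage /= in nM.
      have Uf : U (flip n z).
        apply: cU; rewrite -(flipK n x); exact: agree_flip.
      by have := (proj2 (h _ nM) Uf); move/T0_flip.
    right; apply: contrapT => nM; rewrite /preimage /= in nM.
    have Uf : U (flip n (flip m z)).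
      apply: cU; rewrite -(flipK n x); apply: agree_flip.
      exact: (agree_trans _ _ _ _ (agree_flip_out _ _ _ (leqnn m)) cz).
    have := (proj2 (h _ nM) Uf); move/T0_flip; apply.
    by apply/T0_flip.
  by apply: meagerU; do ?apply: meager_flip.
have nT z : ~ M z -> ~ T0 z.
  by move=> nM /(proj1 (h z nM)) Uz; apply: noU; exists z.
apply: (baire (fun _ => true) 0).
apply: (@meager_sub _ (M `|` (flip 0 @^-1` M))); last first.
  by apply: meagerU => //; exact: meager_flip.
move=> z _; case: (pselect (M z)) => Mz; [by left|right].
apply: contrapT => nM; apply: (nT _ nM); apply/T0_flip; exact: nT.
Qed.

Lemma restr_eq n x y : restr_away n x = restr_away n y -> forall k, k <> n -> x k = y k.
Proof.
move=> e k kn; have := f_equal (fun f => f (exist _ k kn)) e.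
by rewrite /restr_away.
Qed.

Lemma thin_cases n x y : restr_away n x = restr_away n y -> y = x \/ y = flip n x.
Proof.
move=> /restr_eq e.
case: (eqVneq (x n) (y n)) => hn; [left|right];
  apply: functional_extensionality_dep => k; rewrite ?/flip;
  (case: (eqVneq k n) => [->|kn]; [|by rewrite (e k (elimN eqP kn))]).
- by [].
- by move: hn; case: (x n); case: (y n).
Qed.

Theorem corollary14 :
  exists T0 T1 : set cantor_space,
    T0 `&` T1 = set0 /\ thin T0 /\ thin T1 /\
    ~ borel_set T0 /\ ~ borel_set T1 /\
    T0 `|` T1 = [set: cantor_space].
Proof.
exists T0, (~` T0); split; first exact: setICr.
split.
  move=> n x y Tx Ty /thin_cases [->|e] //.
  by move: Ty; rewrite e => /T0_flip.
split.
  move=> n x y Tx Ty /thin_cases [->|e] //.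
  by exfalso; move: Ty; rewrite e; apply; apply/T0_flip.
split; first by move=> /borel_BP; exact: notBP.
split; last exact: setUCr.
by move=> /borel_BP /BPC; rewrite setCK; exact: notBP.
Qed.
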